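(* Let $m$ be a positive integer and $x>1$ an integer. Let $j_m(x)\in\{0,\dots,x-1\}$ be the column of row $x$ of $T_m$ containing the value $1$. Then $J_{m+1}(x)$ is the element of $\{1,2,\dots,x\}$ congruent to $m-j_m(x)$ modulo $x$. Equivalently, in the Josephus game played on row $x$ of $T_m$, the entry $1$ is the last one remaining.
   Context: The triangle $T_m$ is an array whose row $x$ ($x=1,2,\dots$) has $x$ entries, in columns $0,\dots,x-1$. Row $1$ is the single entry $1$. For $x>1$, row $x$ is obtained from row $x-1$ by rotating it cyclically left by $m$ positions (the entry in column $c$ of row $x-1$ moves to column $(c-m)\bmod(x-1)\in\{0,\dots,x-2\}$ of row $x$), then appending in column $x-1$ a new entry equal to $1$ plus the entry in column $0$ of row $x-1$. Each row of $T_m$ contains exactly one entry equal to $1$. Josephus problem: place the integers $1,\dots,x$ clockwise in a circle; starting the count at $1$, repeatedly count $n$ consecutive remaining numbers clockwise and eliminate the $n$-th one counted, resuming the count at the next remaining number, until one number remains; $J_n(x)$ is that number. Josephus game on row $x$ of $T_m$: start at the entry in column $(m-1)\bmod x$, counting it as $1$; moving cyclically to the left (from column $0$ wrap to column $x-1$) over entries not yet crossed out, count $1,2,\dots,m+1$ and cross out the entry counted $m+1$; the next count starts (as $1$) at the next not-crossed-out entry to its left. Repeat until one entry remains. *)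

(* Defs.v *)
From mathcomp Require Import all_boot all_order all_algebra.
Set Implicit Arguments. Unset Strict Implicit. Unset Printing Implicit Defensive.

(* rowT0 m n = row (n+1) of the triangle T_m, as a list indexed by columns 0..n.
   Rotating a row r left by m positions is [rot (m %% size r) r]: the entry in
   column c moves to column (c - m) mod (size r). *)
Fixpoint rowT0 (m n : nat) : seq nat :=
  match n with
  | 0 => [:: 1]
  | n'.+1 => let r := rowT0 m n' in rcons (rot (m %% size r) r) (head 0 r).+1
  end.

Definition Trow (m x : nat) : seq nat := rowT0 m x.-1.

Definition jcol (m x : nat) : nat := index 1 (Trow m x).

(* The list [s] lists the
   remaining items in counting order, starting with the item counted as 1.
   The n-th counted item (index (n-1) mod size s) is removed and the new list
   starts at the next remaining item. *)
Definition elim_step (n : nat) (s : seq nat) : seq nat :=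
  let k := (n.-1) %% size s in drop k.+1 s ++ take k s.

Fixpoint elim_game (n f : nat) (s : seq nat) : seq nat :=
  match f with
  | 0 => s
  | f'.+1 => if size s <= 1 then s else elim_game n f' (elim_step n s)
  end.

Definition J (n x : nat) : nat := head 0 (elim_game n x (iota 1 x)).

(* The Josephus game on row x of T_m: entries listed in leftward cyclic order
   starting from column (m-1) mod x; count to m+1 and cross out. Returns the
   value of the last remaining entry. *)
Definition row_game_last (m x : nat) : nat :=
  head 0 (elim_game m.+1 x (rot (x.-1 - (m.-1 %% x)) (rev (Trow m x)))).

(* Main.v *)
Require Import Defs.
From mathcomp Require Import all_boot all_order all_algebra.
From mathcomp Require Import zify.

Fixpoint Q (n k : nat) : nat := if k is k'.+1 then (n + Q n k') %% k.+1 else 0.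

Lemma Q_lt n k : Q n k < k.+1.
Proof. case: k => [|k] //=; by rewrite ltn_pmod. Qed.

Lemma QS n k : Q n k.+1 = (n + Q n k) %% k.+2.
Proof. by []. Qed.

Lemma nth_rot_mod (T : Type) (x0 : T) s r i : r < size s -> i < size s ->
  nth x0 (rot r s) i = nth x0 s ((r + i) %% size s).
Proof.
move=> hr hi; rewrite /rot nth_cat size_drop; case: ltnP => h.
  by rewrite nth_drop modn_small //; lia.
rewrite nth_take; last lia.
have -> : r + i = 1 * size s + (i - (size s - r)) by lia.
rewrite modnMDl modn_small //; lia.
Qed.

Lemma step_behead n s : 0 < size s ->
  elim_step n s = behead (rot ((n.-1) %% size s) s).
Proof. by move=> hs; rewrite /elim_step /rot [X in behead (X ++ _)](drop_nth 0) ?ltn_pmod. Qed.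

Lemma nth_step n s i : 0 < n -> i < (size s).-1 ->
  nth 0 (elim_step n s) i = nth 0 s ((n + i) %% size s).
Proof.
move=> hn hi; have hs : 0 < size s by lia.
rewrite step_behead // nth_behead nth_rot_mod ?ltn_pmod //; last lia.
rewrite modnDml; congr nth; congr modn; lia.
Qed.

Lemma game_nth n : 0 < n -> forall k s f, size s = k.+1 -> k <= f ->
  elim_game n f s = [:: nth 0 s (Q n k)].
Proof.
move=> hn; elim=> [|k IH] s f hs hf.
  case: s hs => [|a [|]] //= _; by case: f hf.
case: f hf => [|f] hf //.
rewrite /= hs /= IH; last lia; last by rewrite step_behead ?hs // size_behead size_rot hs.
by rewrite nth_step // ?hs // Q_lt.
Qed.

Lemma J_eq n x : 0 < n -> 0 < x -> J n x = (Q n x.-1).+1.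
Proof.
move=> hn; case: x => // x _.
rewrite /J (@game_nth n hn x) ?size_iota //.
by rewrite nth_iota ?Q_lt.
Qed.

Lemma size_R m k : size (rowT0 m k) = k.+1.
Proof. by elim: k => //= k IH; rewrite size_rcons size_rot IH. Qed.

Definition jj m k := if k is k'.+1 then k' - Q m.+1 k' else 0.

Lemma jj_lt m k : jj m k < k.+1.
Proof. case: k => //= k; lia. Qed.

Lemma beq (a b c d : nat) : (a = b <-> c = d) -> (a == b) = (c == d).
Proof. move=> [h1 h2]; by case: eqP => h; case: eqP => h' //; exfalso; auto. Qed.

Lemma modinj a i j d : i < d -> j < d -> (a + i) %% d = (a + j) %% d -> i = j.
Proof. by move=> hi hj /eqP; rewrite eqn_modDl => /eqP; rewrite !modn_small. Qed.

Lemma arithA m k i : i < k.+1 ->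
  ((m %% k.+1 + i) %% k.+1 == jj m k) = (i == k - Q m.+1 k).
Proof.
case: k => [|k] hi.
  by rewrite modn1 /=; have -> : i = 0 by lia.
rewrite /jj QS.
have hq := Q_lt m.+1 k.
set q := Q m.+1 k in hq *.
have C : (m %% k.+2 + (k.+1 - (m.+1 + q) %% k.+2)) %% k.+2 = k - q.
  rewrite modnDml.
  have -> : m + (k.+1 - (m.+1 + q) %% k.+2) = (m.+1 + q) %/ k.+2 * k.+2 + (k - q).
    have := divn_eq (m.+1 + q) k.+2; have := ltn_pmod (m.+1 + q) (ltn0Sn k.+1).
    move: ((m.+1 + q) %/ k.+2 * k.+2) ((m.+1 + q) %% k.+2) => T w; lia.
  rewrite modnMDl modn_small //; lia.
apply: beq; split => h.
  apply: (@modinj (m %% k.+2) _ _ k.+2) => //; first by rewrite ltnS leq_subr.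
  by rewrite h C.
by rewrite h C.
Qed.

Lemma R_inv m k i : i < k.+1 ->
  0 < nth 0 (rowT0 m k) i /\ (nth 0 (rowT0 m k) i == 1) = (i == jj m k).
Proof.
elim: k i => [|k IH] i hi.
  by have -> : i = 0 by lia.
rewrite /= nth_rcons size_rot size_R.
case: (ltnP i k.+1) => h.
  rewrite nth_rot_mod ?size_R ?ltn_pmod //.
  have [h1 h2] := IH _ (ltn_pmod (m %% k.+1 + i) (ltn0Sn k)).
  by split => //; rewrite h2 arithA.
have -> : i == k.+1 by apply/eqP; lia.
have [h1 _] := IH 0 (ltn0Sn k).
rewrite -nth0; split => //.
apply: beq; split => ?; lia.
Qed.

Lemma jcol_eq m k : jcol m k.+1 = jj m k.
Proof.
rewrite /jcol /Trow /=.
have [_ h] := @R_inv m k _ (jj_lt m k).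
have e : nth 0 (rowT0 m k) (jj m k) = 1 by apply/eqP; rewrite h.
have hin : 1 \in rowT0 m k by rewrite -e mem_nth // size_R jj_lt.
have hidx : index 1 (rowT0 m k) < k.+1 by rewrite -(size_R m k) index_mem.
have [_ h2] := @R_inv m k _ hidx.
rewrite nth_index // eqxx in h2.
by apply/eqP; rewrite -h2.
Qed.

Lemma modchar a b t s d : b < d -> t * d + a = s * d + b -> a %% d = b.
Proof. by move=> hb e; rewrite -(modnMDl t) e modnMDl modn_small. Qed.

Lemma modz_conv a b c d : a + c = b %[mod d] ->
  ((a%:Z = b%:Z - c%:Z %[mod d%:Z]))%Z.
Proof.
move=> h.
have -> : (a%:Z = (a + c)%:Z - c%:Z)%R by rewrite PoszD GRing.addrK.
by rewrite -modzDml modz_nat h -modz_nat modzDml.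
Qed.

Lemma part2 m k (hm : 0 < m) (hJ : J m.+1 k.+2 = (Q m.+1 k.+2.-1).+1) (hq : Q m.+1 k < k.+1) :
  ((J m.+1 k.+2)%:Z = m%:Z - (jcol m k.+2)%:Z %[mod k.+2%:Z])%Z.
Proof.
rewrite hJ jcol_eq /=; apply: modz_conv.
set q := Q m.+1 k in hq *.
rewrite -(modnMDl ((m.+1 + q) %/ k.+2)).
have -> : (m.+1 + q) %/ k.+2 * k.+2 + (((m.+1 + q) %% k.+2).+1 + (k - q)) = m + k.+2.
  have := divn_eq (m.+1 + q) k.+2; have := ltn_pmod (m.+1 + q) (ltn0Sn k.+1).
  move: ((m.+1 + q) %/ k.+2 * k.+2) ((m.+1 + q) %% k.+2) => T w; lia.
by rewrite modnDr.
Qed.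

Lemma part3 m k (hm : 0 < m) (hq : Q m.+1 k < k.+1) : row_game_last m k.+2 = 1.
Proof.
rewrite /row_game_last /Trow [k.+2.-1]/=.
rewrite (@game_nth m.+1 (ltn0Sn m) k.+1 _ k.+2) ?size_rot ?size_rev ?size_R //.
have hd : forall a : nat, head 0 [:: a] = a by [].
rewrite hd.
have ha : k.+1 - m.-1 %% k.+2 < k.+2 by lia.
rewrite nth_rot_mod ?size_rev ?size_R ?Q_lt // nth_rev ?size_R ?ltn_pmod //.
have -> : k.+2 - ((k.+1 - m.-1 %% k.+2 + Q m.+1 k.+1) %% k.+2).+1 = jj m k.+1.
  rewrite /jj QS.
  set q := Q m.+1 k in hq *.
  have -> : (k.+1 - m.-1 %% k.+2 + (m.+1 + q) %% k.+2) %% k.+2 = q.+1.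
    apply: (@modchar _ _ ((m.+1 + q) %/ k.+2) (m.-1 %/ k.+2).+1); first lia.
    rewrite mulSn.
    have := divn_eq (m.+1 + q) k.+2; have := ltn_pmod (m.+1 + q) (ltn0Sn k.+1).
    have := divn_eq m.-1 k.+2; have := ltn_pmod m.-1 (ltn0Sn k.+1).
    move: ((m.+1 + q) %/ k.+2 * k.+2) ((m.+1 + q) %% k.+2) => T w.
    move: (m.-1 %/ k.+2 * k.+2) (m.-1 %% k.+2) => S u.
    clearbody q; clear -hm hq; lia.
  lia.
have [_ h] := @R_inv m k.+1 _ (jj_lt m k.+1).
by apply/eqP; rewrite h eqxx.
Qed.

Lemma part1 m k (hJ : J m.+1 k.+2 = (Q m.+1 k.+2.-1).+1) : 1 <= J m.+1 k.+2 <= k.+2.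
Proof. rewrite hJ; have := Q_lt m.+1 k.+1; move: (Q _ _) => q; lia. Qed.

Lemma t3 m k (hm : 0 < m) : row_game_last m k.+2 = 1.
Proof. have hq := Q_lt m.+1 k. exact: part3. Qed.
Lemma t2 m k (hm : 0 < m) : ((J m.+1 k.+2)%:Z = m%:Z - (jcol m k.+2)%:Z %[mod k.+2%:Z])%Z.
Proof. have hJ := @J_eq m.+1 k.+2 (ltn0Sn m) (ltn0Sn k.+1). have hq := Q_lt m.+1 k. exact: part2. Qed.
Lemma t1 m k : 1 <= J m.+1 k.+2 <= k.+2.
Proof. have hJ := @J_eq m.+1 k.+2 (ltn0Sn m) (ltn0Sn k.+1). exact: part1. Qed.
Theorem mainTheorem19 (m x : nat) (hm : 0 < m) (hx : 1 < x) :
  [/\ 1 <= J m.+1 x <= x,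
      ((J m.+1 x)%:Z = m%:Z - (jcol m x)%:Z %[mod x%:Z])%Z
    & row_game_last m x = 1].
Proof.
case: x hx => [|[|k]] hx; try by [].
by split; [exact: t1 | exact: t2 | exact: t3].
Qed.
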